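(* Fix $d,N\ge1$, scenarios $r^{(1)},\dots,r^{(N)}\in\mathbb{R}^d$, $\alpha\in(0,1)$, $\lambda_\mu\ge0$, $\gamma>0$, bounds $\boldsymbol{\ell}\le\boldsymbol{u}$ in $\mathbb{R}^d$, $w_{\mathrm{prev}}\in\mathbb{R}^d$ and $\tau\ge0$ such that the feasible set $\mathcal{W}=\{w\in\mathbb{R}^d:\mathbf{1}^\top w=1,\ \boldsymbol{\ell}\le w\le\boldsymbol{u},\ \|w-w_{\mathrm{prev}}\|_1\le\tau\}$ is nonempty. For $\mu\in\mathbb{R}^d$ and symmetric $\Sigma\succeq0$ define \[ F(w;\mu,\Sigma)=-\lambda_\mu\mu^\top w+\gamma\,w^\top\Sigma w+\min_{\zeta\in\mathbb{R}}\Big\{\zeta+\frac{1}{(1-\alpha)N}\sum_{i=1}^N\big(-w^\top r^{(i)}-\zeta\big)_+\Big\}, \] and let $\hat w(\mu,\Sigma)$ denote a minimizer of $F(\cdot;\mu,\Sigma)$ over $\mathcal{W}$. Let $\hat\mu\in\mathbb{R}^d$ and symmetric $\hat\Sigma\succeq\lambda_{\min}I$ with $\lambda_{\min}>0$. Then there exist constants $c_\mu,c_\Sigma\ge0$ such that for all $\delta\mu\in\mathbb{R}^d$ and all symmetric $\delta\Sigma$ with $\hat\Sigma+\delta\Sigma\succeq0$, \[ \|\hat w(\hat\mu+\delta\mu,\hat\Sigma+\delta\Sigma)-\hat w(\hat\mu,\hat\Sigma)\|_2\le\frac{c_\mu\|\delta\mu\|_2+c_\Sigma\|\delta\Sigma\|_{\mathrm{op}}}{\lambda_{\min}}.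 \]
   Context: This is the CVaR epigraph quadratic program of a portfolio allocator at level $\alpha$ (portfolio loss $-w^\top r$), with budget, box and $\ell_1$ turnover constraints; $\|\cdot\|_{\mathrm{op}}$ is the spectral norm. The constraint data $(\mathcal{W}$, scenarios, $\alpha,\lambda_\mu,\gamma)$ are held fixed while $(\mu,\Sigma)$ are perturbed. *)

(* Defs.v *)
From HB Require Import structures.
From mathcomp Require Import all_boot all_order all_algebra.
From mathcomp Require Import boolp classical_sets reals.
Set Implicit Arguments. Unset Strict Implicit. Unset Printing Implicit Defensive.
Import Order.TTheory GRing.Theory Num.Theory.
Local Open Scope ring_scope.
Local Open Scope classical_set_scope.

Section Defs.
Variable R : realType.

Definition dotv (d : nat) (x y : 'cV[R]_d) : R := \sum_(i < d) x i 0 * y i 0.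
Definition quadf (d : nat) (S : 'M[R]_d) (w : 'cV[R]_d) : R := dotv w (S *m w).
Definition norm2 (d : nat) (x : 'cV[R]_d) : R := Num.sqrt (dotv x x).
Definition norm1 (d : nat) (x : 'cV[R]_d) : R := \sum_(i < d) `|x i 0|.
Definition opnorm (d : nat) (A : 'M[R]_d) : R :=
  sup [set norm2 (A *m x) | x in [set x : 'cV[R]_d | norm2 x <= 1]].

Definition is_symm (d : nat) (S : 'M[R]_d) : Prop := S^T = S.
Definition psd (d : nat) (S : 'M[R]_d) : Prop := forall x : 'cV[R]_d, 0 <= quadf S x.
Definition loewner_ge_scalar (d : nat) (S : 'M[R]_d) (c : R) : Prop :=
  psd (S - c%:M).

Definition feasible (d : nat) (l u wprev : 'cV[R]_d) (tau : R) (w : 'cV[R]_d) : Prop :=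
  dotv (const_mx 1) w = 1 /\
  (forall i, l i 0 <= w i 0 <= u i 0) /\
  norm1 (w - wprev) <= tau.

Definition cvar_obj (d N : nat) (r : 'I_N -> 'cV[R]_d) (alpha : R) (w : 'cV[R]_d) (zeta : R) : R :=
  zeta + ((1 - alpha) * N%:R)^-1 * \sum_(i < N) Num.max 0 (- dotv w (r i) - zeta).
Definition cvar_term (d N : nat) (r : 'I_N -> 'cV[R]_d) (alpha : R) (w : 'cV[R]_d) : R :=
  inf [set cvar_obj r alpha w zeta | zeta in [set: R]].

Definition Fobj (d N : nat) (r : 'I_N -> 'cV[R]_d) (alpha lam_mu gamma : R)
  (mu : 'cV[R]_d) (Sigma : 'M[R]_d) (w : 'cV[R]_d) : R :=
  - lam_mu * dotv mu w + gamma * quadf Sigma w + cvar_term r alpha w.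

Definition is_minimizer (d N : nat) (r : 'I_N -> 'cV[R]_d) (alpha lam_mu gamma : R)
  (l u wprev : 'cV[R]_d) (tau : R) (mu : 'cV[R]_d) (Sigma : 'M[R]_d) (w : 'cV[R]_d) : Prop :=
  feasible l u wprev tau w /\
  forall v, feasible l u wprev tau v ->
    Fobj r alpha lam_mu gamma mu Sigma w <= Fobj r alpha lam_mu gamma mu Sigma v.

End Defs.

(* Main.v *)
Require Import Defs.
From HB Require Import structures.
From mathcomp Require Import all_boot all_order all_algebra.
From mathcomp Require Import boolp classical_sets reals.
From mathcomp Require Import ring lra.
Set Implicit Arguments. Unset Strict Implicit.
Import Order.TTheory GRing.Theory Num.Theory.
Local Open Scope ring_scope.
Local Open Scope classical_set_scope.

Section S.
Variable R : realType.
Variable d : nat.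
Implicit Types x y z a b v w : 'cV[R]_d.

Lemma dotvDl x y z : dotv (x + y) z = dotv x z + dotv y z.
Proof. by rewrite /dotv -big_split; apply eq_bigr => i _; rewrite mxE mulrDl. Qed.
Lemma dotvDr x y z : dotv z (x + y) = dotv z x + dotv z y.
Proof. by rewrite /dotv -big_split; apply eq_bigr => i _; rewrite mxE mulrDr. Qed.
Lemma dotvZl (a : R) x y : dotv (a *: x) y = a * dotv x y.
Proof. by rewrite /dotv mulr_sumr; apply eq_bigr => i _; rewrite mxE mulrA. Qed.
Lemma dotvZr (a : R) x y : dotv x (a *: y) = a * dotv x y.
Proof. by rewrite /dotv mulr_sumr; apply eq_bigr => i _; rewrite mxE mulrCA. Qed.
Lemma dotvNl x y : dotv (- x) y = - dotv x y.
Proof. by rewrite -scaleN1r dotvZl mulN1r. Qed.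
Lemma dotvNr x y : dotv x (- y) = - dotv x y.
Proof. by rewrite -scaleN1r dotvZr mulN1r. Qed.
Lemma dotvBl x y z : dotv (x - y) z = dotv x z - dotv y z.
Proof. by rewrite dotvDl dotvNl. Qed.
Lemma dotvBr x y z : dotv z (x - y) = dotv z x - dotv z y.
Proof. by rewrite dotvDr dotvNr. Qed.
Lemma dotv_ge0 x : 0 <= dotv x x.
Proof. by apply: sumr_ge0 => i _; rewrite -expr2 sqr_ge0. Qed.

Lemma coord_le_norm2 x i : `|x i 0| <= norm2 x.
Proof.
rewrite /norm2 -sqrtr_sqr ler_sqrt ?dotv_ge0 // /dotv (bigD1 i) //= -expr2 lerDl.
by apply: sumr_ge0 => j _; rewrite -expr2 sqr_ge0.
Qed.

Lemma norm1_le x : norm1 x <= d%:R * norm2 x.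
Proof.
have -> : d%:R * norm2 x = \sum_(i < d) norm2 x by rewrite sumr_const card_ord mulr_natl.
rewrite /norm1; apply: ler_sum => i _.
exact: coord_le_norm2.
Qed.

Lemma norm2_le_norm1 x : norm2 x <= norm1 x.
Proof.
have h0 : 0 <= norm1 x by apply: sumr_ge0.
rewrite /norm2 -(ger0_norm h0) -sqrtr_sqr ler_sqrt ?sqr_ge0 // expr2 /dotv.
rewrite {2}/norm1 mulr_sumr; apply: ler_sum => i _.
apply: (le_trans (ler_norm _)); rewrite normrM.
rewrite ler_wpM2r ?normr_ge0 // /norm1 (bigD1 i) //= lerDl.
by apply: sumr_ge0.
Qed.


Lemma dotv_le x y : `|dotv x y| <= norm2 x * norm1 y.
Proof.
rewrite /dotv /norm1 mulr_sumr; apply: (le_trans (ler_norm_sum _ _ _)).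
apply: ler_sum => i _; rewrite normrM ler_wpM2r ?normr_ge0 //.
exact: coord_le_norm2.
Qed.

Lemma opnorm_has_ub (A : 'M[R]_d) :
  has_ubound [set norm2 (A *m x) | x in [set x : 'cV[R]_d | norm2 x <= 1]].
Proof.
exists (\sum_i \sum_j `|A i j|) => _ [x /= hx <-].
apply: (le_trans (norm2_le_norm1 _)); rewrite /norm1; apply: ler_sum => i _.
rewrite mxE; apply: (le_trans (ler_norm_sum _ _ _)); apply: ler_sum => j _.
rewrite normrM -{2}[`|A i j|]mulr1 ler_wpM2l ?normr_ge0 //.
exact: le_trans (coord_le_norm2 _ _) hx.
Qed.

Lemma entry_le_opnorm (A : 'M[R]_d) i j : `|A i j| <= opnorm A.
Proof.
pose e : 'cV[R]_d := delta_mx j 0.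
have he : A *m e = col j A by rewrite colE.
have hn : norm2 e <= 1.
  rewrite /norm2 /dotv (bigD1 j) //= big1 ?addr0.
    by rewrite !mxE !eqxx mulr1 sqrtr1.
  by move=> k hk; rewrite !mxE (negbTE hk) mul0r.
apply: (le_trans _ (ub_le_sup (opnorm_has_ub A) _)); last by exists e.
by rewrite he; apply: (le_trans _ (coord_le_norm2 _ i)); rewrite mxE.
Qed.

Lemma bil_le (A : 'M[R]_d) x y : `|dotv x (A *m y)| <= norm1 x * opnorm A * norm1 y.
Proof.
rewrite /dotv /norm1 !mulr_suml; apply: (le_trans (ler_norm_sum _ _ _)).
apply: ler_sum => i _; rewrite normrM -mulrA ler_wpM2l ?normr_ge0 //.
rewrite mxE mulr_sumr; apply: (le_trans (ler_norm_sum _ _ _)).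
apply: ler_sum => j _; rewrite normrM ler_wpM2r ?normr_ge0 //.
exact: entry_le_opnorm.
Qed.


Lemma quadfD (S T : 'M[R]_d) x : quadf (S + T) x = quadf S x + quadf T x.
Proof. by rewrite /quadf mulmxDl dotvDr. Qed.

Lemma quadf_loew (S : 'M[R]_d) (a : R) x : quadf (S - a%:M) x = quadf S x - a * dotv x x.
Proof. by rewrite /quadf mulmxBl mul_scalar_mx dotvBr dotvZr. Qed.

Lemma quad_mid (S : 'M[R]_d) a b :
  4 * quadf S (2^-1 *: (a + b)) = quadf S a + quadf S b + dotv a (S *m b) + dotv b (S *m a).
Proof.
rewrite /quadf -scalemxAr dotvZl dotvZr mulmxDr !dotvDl !dotvDr.
field; rewrite ?pnatr_eq0 //.
Qed.

Lemma quad_diff (S : 'M[R]_d) a b :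
  quadf S (a - b) = quadf S a + quadf S b - dotv a (S *m b) - dotv b (S *m a).
Proof. rewrite /quadf mulmxBr !dotvBl !dotvBr; lra. Qed.

Lemma dot_mid_l a b v : dotv (2^-1 *: (a + b)) v = (dotv a v + dotv b v) / 2.
Proof. by rewrite dotvZl dotvDl mulrC. Qed.
Lemma dot_mid_r a b v : dotv v (2^-1 *: (a + b)) = (dotv v a + dotv v b) / 2.
Proof. by rewrite dotvZr dotvDr mulrC. Qed.

Lemma feas_mid l u wp tau a b : feasible l u wp tau a -> feasible l u wp tau b ->
  feasible l u wp tau (2^-1 *: (a + b)).
Proof.
move=> [ha1 [ha2 ha3]] [hb1 [hb2 hb3]]; split; first by rewrite dot_mid_r ha1 hb1; field.
split.
  move=> i; rewrite !mxE; have /andP[h1 h2] := ha2 i; have /andP[h3 h4] := hb2 i.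
  apply/andP; split; lra.
apply: le_trans (_ : (norm1 (a - wp) + norm1 (b - wp)) / 2 <= tau); last lra.
rewrite /norm1 -big_split mulr_suml /=; apply: ler_sum => i _; rewrite !mxE.
rewrite (_ : 2^-1 * (a i 0 + b i 0) - wp i 0 = ((a i 0 - wp i 0) + (b i 0 - wp i 0)) / 2); last lra.
rewrite normrM (ger0_norm (_ : 0 <= 2^-1 :> R)) ?invr_ge0 ?ler0n // mulrC.
by rewrite [X in _ <= X]mulrC ler_wpM2l ?invr_ge0 ?ler0n // ler_normD.
Qed.

Lemma feas_norm1 l u wp tau w : feasible l u wp tau w ->
  norm1 w <= \sum_(i < d) (`|l i 0| + `|u i 0|).
Proof.
move=> [_ [h _]]; apply: ler_sum => i _; have /andP[h1 h2] := h i.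
have hu := ler_norm (u i 0); have := ler_norm (- l i 0); rewrite normrN => hl.
have hl0 := normr_ge0 (l i 0); have hu0 := normr_ge0 (u i 0).
case: (lerP 0 (w i 0)) => hw; [rewrite ger0_norm // | rewrite ltr0_norm //]; lra.
Qed.

End S.

Section C.
Variable R : realType.
Variables d N : nat.
Variable r : 'I_N -> 'cV[R]_d.
Variable alpha : R.
Hypothesis hN : (0 < N)%N.
Hypothesis ha : 0 < alpha < 1.

Let c := ((1 - alpha) * N%:R)^-1.

Lemma c_ge0 : 0 <= c.
Proof. case/andP: ha => h0 h1. rewrite /c invr_ge0 mulr_ge0 // ?subr_ge0 ?ltW //. Qed.

Lemma cN_ge1 : 1 <= c * N%:R.
Proof.
case/andP: ha => h0 h1.
have hN' : (N%:R : R) != 0 by rewrite pnatr_eq0 -lt0n.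
rewrite /c invfM -mulrA mulVf // mulr1 invf_ge1 ?subr_gt0 //; lra.
Qed.

Lemma cvar_lb (w : 'cV[R]_d) : exists M, forall z, M <= cvar_obj r alpha w z.
Proof.
exists (Num.min 0 (c * \sum_(i < N) (- dotv w (r i)))) => z.
rewrite /cvar_obj -/c.
have hS0 : 0 <= \sum_(i < N) Num.max 0 (- dotv w (r i) - z).
  by apply: sumr_ge0 => i _; rewrite le_max lexx.
have hS1 : \sum_(i < N) (- dotv w (r i)) - N%:R * z <= \sum_(i < N) Num.max 0 (- dotv w (r i) - z).
  rewrite -[N in N%:R]card_ord mulr_natl -sumr_const -sumrB.
  by apply: ler_sum => i _; rewrite le_max lexx orbT.
have hc := c_ge0; have hcN := cN_ge1.
set S := \sum_(i < N) Num.max 0 _ in hS0 hS1 *.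
set A := \sum_(i < N) _ in hS1 *.
have h1 := ler_wpM2l hc hS1.
have h2 := ler_wpM2l hc hS0.
case: (leP 0 z) => hz.
  rewrite ge_min; apply/orP; left; rewrite mulr0 in h2; lra.
rewrite ge_min; apply/orP; right.
have h3 : 0 <= z * (1 - c * N%:R) by rewrite nmulr_rge0 // subr_le0.
rewrite mulrBr in h1. nra.
Qed.


Lemma max0_mid (a b : R) : Num.max 0 ((a + b) / 2) <= (Num.max 0 a + Num.max 0 b) / 2.
Proof.
have ha0 : 0 <= Num.max 0 a by rewrite le_max lexx.
have hb0 : 0 <= Num.max 0 b by rewrite le_max lexx.
have ha1 : a <= Num.max 0 a by rewrite le_max lexx orbT.
have hb1 : b <= Num.max 0 b by rewrite le_max lexx orbT.
rewrite ge_max; apply/andP; split; lra.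
Qed.

Lemma obj_mid (w0 w1 : 'cV[R]_d) z0 z1 :
  (forall i, dotv (2^-1 *: (w0 + w1)) (r i) = (dotv w0 (r i) + dotv w1 (r i)) / 2) ->
  cvar_obj r alpha (2^-1 *: (w0 + w1)) ((z0 + z1) / 2)
  <= (cvar_obj r alpha w0 z0 + cvar_obj r alpha w1 z1) / 2.
Proof.
move=> hd; rewrite /cvar_obj -/c.
have : \sum_(i < N) Num.max 0 (- dotv (2^-1 *: (w0 + w1)) (r i) - (z0 + z1) / 2)
  <= (\sum_(i < N) Num.max 0 (- dotv w0 (r i) - z0) + \sum_(i < N) Num.max 0 (- dotv w1 (r i) - z1)) / 2.
  rewrite -big_split /= mulr_suml; apply: ler_sum => i _; rewrite hd.
  rewrite (_ : - ((dotv w0 (r i) + dotv w1 (r i)) / 2) - (z0 + z1) / 2 =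
     ((- dotv w0 (r i) - z0) + (- dotv w1 (r i) - z1)) / 2); first exact: max0_mid.
  lra.
move/(ler_wpM2l c_ge0); set S := \sum_(i < N) _; set S0 := \sum_(i < N) _; set S1 := \sum_(i < N) _.
move=> h; lra.
Qed.


Lemma cvar_inf_le (w : 'cV[R]_d) z : cvar_term r alpha w <= cvar_obj r alpha w z.
Proof.
have [M hM] := cvar_lb w.
have hl : has_lbound [set cvar_obj r alpha w zeta | zeta in [set: R]].
  by exists M => _ [y _ <-].
by apply: (ge_inf hl); exists z.
Qed.

Lemma cvar_le_inf (w : 'cV[R]_d) x : (forall z, x <= cvar_obj r alpha w z) ->
  x <= cvar_term r alpha w.
Proof.
move=> h; apply: lb_le_inf; first by exists (cvar_obj r alpha w 0), 0.
by move=> _ [z _ <-].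
Qed.

Lemma cvar_mid (w0 w1 : 'cV[R]_d) :
  (forall i, dotv (2^-1 *: (w0 + w1)) (r i) = (dotv w0 (r i) + dotv w1 (r i)) / 2) ->
  2 * cvar_term r alpha (2^-1 *: (w0 + w1)) <= cvar_term r alpha w0 + cvar_term r alpha w1.
Proof.
move=> hd.
set Cm := cvar_term r alpha _.
have h : forall z0 z1, 2 * Cm - cvar_obj r alpha w1 z1 <= cvar_obj r alpha w0 z0.
  move=> z0 z1; have := obj_mid z0 z1 hd; have := (@cvar_inf_le (2^-1 *: (w0 + w1)) ((z0 + z1) / 2)).
  rewrite -/Cm; lra.
have h2 : forall z1, 2 * Cm - cvar_term r alpha w0 <= cvar_obj r alpha w1 z1.
  move=> z1; have := cvar_le_inf (h ^~ z1); lra.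
have := cvar_le_inf h2; lra.
Qed.

End C.
Lemma fin_ineq (R : realFieldType) (g L lm n a K op dd : R) :
  0 < g -> 0 < L -> 0 <= lm -> 0 <= n -> 0 <= a -> 0 <= K -> 0 <= op -> 0 <= dd ->
  g * L / 2 * (n * n) <= n * (lm * a * dd + 2 * g * K * op * dd) ->
  n <= (2 * dd * lm / g * a + 4 * dd * K * op) / L.
Proof.
move=> hg hL hlm hn ha hK hop hd h.
rewrite ler_pdivlMr // (_ : 2 * dd * lm / g * a = (2 * dd * lm * a) / g); last by field; rewrite gt_eqF.
have h0 : 0 <= 2 * dd * lm * a / g.
  apply: divr_ge0; last exact: ltW.
  by rewrite !mulr_ge0 ?ler0n.
have h1 : 0 <= 4 * dd * K * op by rewrite !mulr_ge0 ?ler0n.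
case: (eqVneq n 0) => [-> | hn0]; first by rewrite mul0r; lra.
have hnp : 0 < n by rewrite lt_def hn0 hn.
have h2 : g * L / 2 * n <= lm * a * dd + 2 * g * K * op * dd.
  by rewrite -(ler_pM2r hnp); lra.
rewrite -(ler_pM2l hg) mulrDr.
rewrite (_ : g * (2 * dd * lm * a / g) = 2 * dd * lm * a); last by field; rewrite gt_eqF.
lra.
Qed.

Theorem mainTheorem4 (R : realType) (d N : nat) (r : 'I_N -> 'cV[R]_d)
  (alpha lam_mu gamma : R) (l u wprev : 'cV[R]_d) (tau : R)
  (muhat : 'cV[R]_d) (Sigmahat : 'M[R]_d) (lam_min : R) :
  (0 < d)%N -> (0 < N)%N ->
  0 < alpha < 1 -> 0 <= lam_mu -> 0 < gamma ->
  (forall i, l i 0 <= u i 0) -> 0 <= tau ->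
  (exists w, feasible l u wprev tau w) ->
  is_symm Sigmahat -> 0 < lam_min -> loewner_ge_scalar Sigmahat lam_min ->
  exists c_mu c_Sigma : R, 0 <= c_mu /\ 0 <= c_Sigma /\
    forall (dmu : 'cV[R]_d) (dSigma : 'M[R]_d),
      is_symm dSigma -> psd (Sigmahat + dSigma) ->
      forall w1 w0 : 'cV[R]_d,
        is_minimizer r alpha lam_mu gamma l u wprev tau (muhat + dmu) (Sigmahat + dSigma) w1 ->
        is_minimizer r alpha lam_mu gamma l u wprev tau muhat Sigmahat w0 ->
        norm2 (w1 - w0) <= (c_mu * norm2 dmu + c_Sigma * opnorm dSigma) / lam_min.
Proof.
move=> hd hN ha hlm hg hlu htau _ hsym hL hloew.
set K := \sum_(i < d) (`|l i 0| + `|u i 0|).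
have hK : 0 <= K by apply: sumr_ge0 => i _; apply: addr_ge0.
exists (2 * d%:R * lam_mu / gamma), (4 * d%:R * K); split.
  by apply: divr_ge0; [rewrite !mulr_ge0 ?ler0n | exact: ltW].
split; first by rewrite !mulr_ge0 ?ler0n.
move=> dmu dS hsymd hpsd w1 w0 [hf1 hm1] [hf0 hm0].
have hfm := feas_mid hf0 hf1.
have H0 := hm0 _ hfm.
have H1 := hm1 _ hfm.
have Hc := @cvar_mid R d N r alpha hN ha w0 w1 (fun i => dot_mid_l _ _ _).
rewrite /Fobj !dot_mid_r !dotvDl !quadfD in H0 H1.
have hq0 := quad_mid Sigmahat w0 w1.
have hq1 := quad_mid dS w0 w1.
have hl1 := hloew (w1 - w0); rewrite quadf_loew quad_diff in hl1.
have hp1 := hpsd (w1 - w0); rewrite quadfD !quad_diff in hp1.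
have hg1 := mulr_ge0 (ltW hg) hl1.
have hg2 := mulr_ge0 (ltW hg) hp1.
set dd := dotv (w1 - w0) (w1 - w0).
set X := dotv dmu (w1 - w0).
have hX : X = dotv dmu w1 - dotv dmu w0 by rewrite /X dotvBr.
set B1 := dotv w1 (dS *m (w1 - w0)).
set B2 := dotv (w1 - w0) (dS *m w0).
have hY : B1 + B2 = quadf dS w1 - quadf dS w0.
  by rewrite /B1 /B2 /quadf mulmxBr dotvBr dotvBl; lra.
have key : gamma * lam_min / 2 * dd <= lam_mu * X - gamma * (B1 + B2).
  have hq0' := congr1 (fun t => gamma * t) hq0.
  have hq1' := congr1 (fun t => gamma * t) hq1.
  rewrite /= in hq0' hq1'.
  rewrite hX hY /dd; lra.
set n := norm2 (w1 - w0).
have hn0 : 0 <= n by apply: sqrtr_ge0.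
have hnn : n * n = dd by rewrite -expr2 sqr_sqrtr // dotv_ge0.
set op := opnorm dS.
have hop : 0 <= op.
  exact: le_trans (normr_ge0 _) (entry_le_opnorm dS (Ordinal hd) (Ordinal hd)).
have hnd : norm1 (w1 - w0) <= d%:R * n by apply: norm1_le.
have hd0 : 0 <= (d%:R : R) by apply: ler0n.
have hXb : lam_mu * X <= lam_mu * (norm2 dmu * (d%:R * n)).
  apply: ler_wpM2l => //; apply: le_trans (ler_norm _) _.
  apply: le_trans (dotv_le _ _) _; apply: ler_wpM2l => //; exact: sqrtr_ge0.
have hprod : forall a b : R, 0 <= a -> a <= K -> 0 <= b -> b <= d%:R * n ->
    a * op * b <= K * op * (d%:R * n).
  move=> a b ha0 haK hb0 hbn; apply: ler_pM => //; first exact: mulr_ge0.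
  exact: ler_pM.
have hn1 : forall w : 'cV[R]_d, 0 <= norm1 w by move=> w; apply: sumr_ge0.
have hB1 : `|B1| <= K * op * (d%:R * n).
  apply: le_trans (bil_le _ _ _) _.
  by apply: hprod => //; exact: feas_norm1 hf1.
have hB2 : `|B2| <= K * op * (d%:R * n).
  apply: le_trans (bil_le _ _ _) _.
  have := hprod _ _ (hn1 w0) (feas_norm1 hf0) (hn1 (w1 - w0)) hnd.
  rewrite -/op; set A := norm1 w0; set Bn := norm1 (w1 - w0); move=> h; lra.
have hYb : - (gamma * (B1 + B2)) <= gamma * (2 * K * op * (d%:R * n)).
  rewrite -mulrN; apply: ler_wpM2l; first exact: ltW.
  have := ler_norm (- B1); have := ler_norm (- B2); rewrite !normrN; lra.
apply: fin_ineq => //; first exact: sqrtr_ge0.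
rewrite hnn; lra.
Qed.
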